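(* Let $K(t,x,z)=\sum_{S} t^{\mathrm{da}(S)}x^{m(S)}z^{|S|}$, where the sum runs over all compositions $S$ (of all nonnegative integers $n$, including the empty composition of $0$), $m(S)$ is the number of parts of $S$ and $|S|$ is the sum of its parts. Then, as formal power series, $$K(t,x,z)=\frac{(1-z+xz)(1-z^2)}{(1-z)(1-(1+x^2)z^2)-2tx^2z^3}.$$
   Context: A composition of $n$ with $m$ parts is a sequence $(a_1,\dots,a_m)$ of positive integers with $m\ge 0$ and $a_1+\dots+a_m=n$. For a finite sequence $S=(a_1,\dots,a_m)$, the degree of asymmetry is $\mathrm{da}(S)=|\{i: 1\le i\le m/2,\ a_i\neq a_{m+1-i}\}|$. *)

(* Defs.v *)
From mathcomp Require Import all_boot all_order all_algebra.
Set Implicit Arguments. Unset Strict Implicit. Unset Printing Implicit Defensive.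
Import GRing.Theory.
Local Open Scope ring_scope.

Definition is_composition (n : nat) (s : seq nat) : bool :=
  all (fun a => 0 < a)%N s && (sumn s == n).

(* degree of asymmetry: #{ i : 1 <= i <= m/2, a_i <> a_{m+1-i} } (0-indexed here) *)
Definition da (s : seq nat) : nat :=
  count (fun i => nth 0%N s i != nth 0%N s (size s - 1 - i)) (iota 0 (size s)./2).

(* Every composition of n has m <= n parts, each <= n, so
   it is enumerated exactly once as an m.-tuple of 'I_n.+1 with m < n.+1. *)
Definition Kcoef (R : comRingType) (t x : R) (n : nat) : R :=
  \sum_(m < n.+1)
     \sum_(s : m.-tuple 'I_n.+1 | is_composition n (map val s))
        t ^+ da (map val s) * x ^+ m.

Definition Knum (R : comRingType) (t x : R) : {poly R} :=
  (1 - 'X + x%:P * 'X) * (1 - 'X ^+ 2).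

Definition Kden (R : comRingType) (t x : R) : {poly R} :=
  (1 - 'X) * (1 - (1 + x ^+ 2)%:P * 'X ^+ 2) - (2 * t * x ^+ 2)%:P * 'X ^+ 3.

(* Main.v *)
Require Import Defs.
From mathcomp Require Import all_boot all_order all_algebra zify ring.
Import GRing.Theory.
Local Open Scope ring_scope.

Module Aux.
Set Implicit Arguments. Unset Strict Implicit. Unset Printing Implicit Defensive.


Fixpoint Sq (r : seq nat) (m : nat) : seq (seq nat) :=
  match m with
  | 0 => [:: [::]]
  | 1 => [seq [:: a] | a <- r]
  | m'.+2 => [seq a :: rcons bl.2 bl.1 | a <- r, bl <- [seq (b, l) | b <- r, l <- Sq r m']]
  end.

Lemma memS r m l : (l \in Sq r m) = (size l == m) && all (mem r) l.
Proof.
elim/ltn_ind: m l => [[|[|m]]] IH l /=.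
- by rewrite inE; case: l.
- apply/mapP/idP => [[a ar ->]|]; first by rewrite /= ar.
  by case: l => [|a [|]] //= /andP[ar _]; exists a.
- apply/allpairsP/idP => [[[a bl] [/= ar /allpairsP [[b l'] [/= br l'S ->]] ->]]|].
  + move: l'S; rewrite IH // => /andP[/eqP sz al].
    rewrite /= size_rcons sz eqxx ar all_rcons al andbT; exact: br.
  + case: l => [|a l1] //=; case/lastP: l1 => [|l' b] //=.
    rewrite size_rcons all_rcons !eqSS => /and3P[sz ar /andP[br al]].
    exists (a, (b, l')); split => //=.
    by apply: (allpairs_f pair) => //; rewrite IH // sz.
Qed.

Lemma uniqS r m : uniq r -> uniq (Sq r m).
Proof.
move=> ur; elim/ltn_ind: m => [[|[|m]]] IH //=.
- by rewrite map_inj_uniq // => a b [].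
- apply: allpairs_uniq => //; first apply: allpairs_uniq => //; first exact: IH.
    by move=> [b l] [b' l'] _ _ /= [-> ->].
  move=> [a [b l]] [a' [b' l']] _ _ /= [-> E].
  have := congr1 (last 0%N) E; rewrite !last_rcons => eb; subst b'.
  by move/rcons_inj: E => [->].
Qed.


Lemma tupleS (R : comRingType) (n m : nat) (P : pred (seq nat)) (F : seq nat -> R) :
  \sum_(s : m.-tuple 'I_n.+1 | P (map val s)) F (map val s) =
  \sum_(l <- Sq (index_iota 0 n.+1) m | P l) F l.
Proof.
rewrite -(big_map (fun s : m.-tuple 'I_n.+1 => map val s) P F).
apply: perm_big; apply: uniq_perm.
- rewrite map_inj_uniq ?index_enum_uniq // => s1 s2 /(inj_map val_inj) E.
  exact: val_inj.
- by apply: uniqS; apply: iota_uniq.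
move=> l; rewrite memS; apply/mapP/idP => [[s _ ->]|/andP[/eqP sz al]].
  rewrite size_map size_tuple eqxx /=; apply/allP => y /mapP [i _ ->].
  by have : (val i \in index_iota 0 n.+1) by rewrite mem_index_iota ltn_ord.
have Hs : size (map (@inord n) l) == m by rewrite size_map sz.
exists (Tuple Hs); first by rewrite mem_index_enum.
rewrite /= -map_comp map_id_in // => y yl /=.
by rewrite inordK //; move/allP: al => /(_ y yl) H; have : (y \in index_iota 0 n.+1) by []; rewrite mem_index_iota.
Qed.

Lemma filterS (R : comRingType) r1 r2 m (P : pred (seq nat)) (F : seq nat -> R) :
  uniq r1 -> uniq r2 -> (forall l, P l -> all (mem r1) l = all (mem r2) l) ->
  \sum_(l <- Sq r1 m | P l) F l = \sum_(l <- Sq r2 m | P l) F l.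
Proof.
move=> u1 u2 H; rewrite -big_filter -[RHS]big_filter; apply: perm_big.
apply: uniq_perm; rewrite ?filter_uniq ?uniqS //.
move=> l; rewrite !mem_filter !memS; case Pl: (P l) => //=.
by rewrite H.
Qed.

Lemma comp_bound n l : is_composition n l -> (size l <= n)%N && all (fun a => 0 < a <= n)%N l.
Proof.
case/andP=> pos /eqP <-; elim: l pos => [|a l IH] //= /andP[a0 /IH /andP[sz al]].
rewrite a0 leq_addr /=; apply/andP; split; first lia.
apply/allP => y yl; move/allP: al => /(_ y yl) /andP[y0 yle]; lia.
Qed.

Lemma comp_cons n a b l : is_composition n (a :: rcons l b) =
  [&& (0 < a)%N, (0 < b)%N, (a + b <= n)%N & is_composition (n - a - b) l].
Proof.
rewrite /is_composition /= all_rcons sumn_rcons.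
case: (0 < a)%N; case: (0 < b)%N; rewrite ?andbF //=.
case: (all _ l); rewrite ?andbF //=.
by apply/eqP/andP => [H|[/eqP H1 /eqP H2]]; [split; apply/eqP|]; lia.
Qed.

Lemma da_cons a b l : da (a :: rcons l b) = ((a != b) + da l)%N.
Proof.
rewrite /da /= size_rcons /= nth_rcons ltnn eqxx; congr (_ + _)%N.
rewrite (_ : iota 1 _ = map (addn 1) (iota 0 (size l)./2)); last by rewrite -iotaDl.
rewrite count_map; apply: eq_in_count => i.
rewrite mem_iota add0n => /andP[_ ilt].
have il : (i < size l)%N by move: ilt; rewrite -divn2; move=> H; have := leq_div (size l) 2; lia.
have il2 : (i < size l - 1 - i)%N by move: ilt; rewrite -divn2; move=> H; have := leq_div (size l) 2; have := leq_trunc_div (size l) 2; lia.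
rewrite /= add1n /= nth_rcons il.
rewrite (_ : ((size l).+2 - 1 - i.+1 = (size l - 1 - i).+1)%N); last by lia.
by rewrite /= nth_rcons; have -> : (size l - 1 - i < size l)%N by lia.
Qed.


Section K.
Variables (R : comRingType) (t x : R).

Definition Ksum r M n : R :=
  \sum_(m < M) \sum_(l <- Sq r m | is_composition n l) t ^+ da l * x ^+ m.

Lemma Kcoef_Ksum n : Kcoef t x n = Ksum (index_iota 0 n.+1) n.+1 n.
Proof.
apply: eq_bigr => m _.
exact: (tupleS n m (is_composition n) (fun l => t ^+ da l * x ^+ m)).
Qed.

Lemma Ksum_norm r M n : uniq r -> (forall a, (0 < a <= n)%N -> a \in r) -> (n < M)%N ->
  Ksum r M n = Kcoef t x n.
Proof.
move=> ur rn nM; rewrite Kcoef_Ksum /Ksum.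
rewrite (big_ord_widen M (fun m => \sum_(l <- Sq (index_iota 0 n.+1) m | is_composition n l)
   t ^+ da l * x ^+ m)) //.
rewrite [RHS]big_mkcond /=; apply: eq_bigr => m _.
case: ifP => mn.
  apply: filterS => //; first exact: iota_uniq.
  move=> l /comp_bound /andP[_ al].
  have -> : all (mem r) l.
    by apply/allP => y yl; move/allP: al => /(_ y yl) /rn.
  apply/esym/allP => y yl; move/allP: al => /(_ y yl) H.
  by have : (y \in index_iota 0 n.+1) by rewrite mem_index_iota; lia.
apply: big1_seq => l /andP[/comp_bound /andP[sz _]].
by rewrite memS => /andP[/eqP szm _]; move: mn; rewrite -szm ltnS sz.
Qed.

Lemma S2_sum r i n :
  \sum_(l <- Sq r i.+2 | is_composition n l) t ^+ da l * x ^+ i.+2 =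
  \sum_(a <- r) \sum_(b <- r) (if [&& (0 < a)%N, (0 < b)%N & (a + b <= n)%N] then
     x ^+ 2 * (t ^+ (a != b) * \sum_(l <- Sq r i | is_composition (n - a - b) l) t ^+ da l * x ^+ i)
     else 0).
Proof.
rewrite /= big_flatten /= big_map; apply: eq_bigr => a _.
rewrite big_map big_flatten /= big_map; apply: eq_bigr => b _.
rewrite big_map.
case: ifP => c.
  rewrite !mulr_sumr; apply: eq_big => [l|l _]; first by rewrite comp_cons; move: c; case: (0 < a)%N; case: (0 < b)%N; case: (a + b <= n)%N.
  by rewrite da_cons exprD !exprS expr0 mulr1; ring.
by apply: big_pred0 => l; rewrite comp_cons; move: c; case: (0 < a)%N; case: (0 < b)%N; case: (a + b <= n)%N.
Qed.

Lemma Ksum_dec r M n : Ksum r M.+2 n =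
  (n == 0)%:R + \sum_(a <- r | (0 < a)%N && (a == n)) x +
  x ^+ 2 * \sum_(a <- r) \sum_(b <- r | [&& (0 < a)%N, (0 < b)%N & (a + b <= n)%N])
     t ^+ (a != b) * Ksum r M (n - a - b).
Proof.
rewrite /Ksum -!(big_mkord xpredT (fun m => \sum_(l <- Sq r m | is_composition n l) t ^+ da l * x ^+ m)).
rewrite big_nat_recl // big_nat_recl //=.
rewrite big_cons big_nil -addrA; congr (_ + (_ + _)).
- by rewrite /is_composition /=; case: n => //=; rewrite addr0 expr0 mulr1.
- rewrite big_map; apply: eq_big => [a|a _]; first by rewrite /is_composition /= addn0 andbT.
  by rewrite expr0 mul1r.
rewrite big_mkord (eq_bigr _ (fun (i : 'I_M) _ => S2_sum r i n)).
rewrite exchange_big /=; rewrite mulr_sumr; apply: eq_bigr => a _.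
rewrite exchange_big /= mulr_sumr [RHS]big_mkcond; apply: eq_bigr => b _.
case: ifP => c.
  by rewrite !mulr_sumr.
by rewrite big1.
Qed.

End K.


Section K2.
Variables (R : comRingType) (t x : R).

Definition g (s : nat) : R := \sum_(a < s.+1 | (0 < a < s)%N) t ^+ (a != (s - a)%N :> nat).

Definition sig (n a : nat) (j : 'I_n.+1) : 'I_n.+1 :=
  inord (if (j <= n - a)%N then (n - a - j)%N else j).

Lemma sig_inv n a : involutive (@sig n a).
Proof.
move=> j; apply: val_inj; rewrite /sig /=; have := ltn_ord j.
case: (leqP j (n - a)) => h hj.
  rewrite (@inordK n (n - a - j)); last by lia.
  by rewrite leq_subr inordK /=; lia.
by rewrite (@inordK n j) // leqNgt h /= inordK.
Qed.

Lemma conv (k : nat -> R) n :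
  \sum_(a < n.+1) \sum_(b < n.+1 | [&& (0 < a)%N, (0 < b)%N & (a + b <= n)%N])
     t ^+ (a != b) * k (n - a - b)%N =
  \sum_(j < n.+1) k j * g (n - j)%N.
Proof.
rewrite /g.
transitivity (\sum_(j < n.+1) \sum_(a < n.+1) if (0 < a < n - j)%N then k j * t ^+ (a != (n - j - a)%N :> nat) else 0).
  rewrite exchange_big /=; apply: eq_bigr => a _.
  rewrite big_mkcond (reindex_inj (inv_inj (@sig_inv n a))) /=.
  apply: eq_bigr => b _; rewrite /sig.
  have := ltn_ord b; have := ltn_ord a.
  move=> ha hb.
  have H1 : ((if (b <= n - a) then n - a - b else b) < n.+1)%N.
    by case: ifP => _; lia.
  rewrite -(inj_eq val_inj) /= inordK //.
  move: (nat_of_ord a) (nat_of_ord b) ha hb H1 => {}a {}b ha hb H1.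
  case: (leqP b (n - a)) => h.
    have -> : (n - a - (n - a - b) = b)%N by lia.
    rewrite (_ : (a + (n - a - b) <= n)%N = true); last by lia.
    rewrite [(n - a - b)%N]subnAC subn_gt0 andbT.
    by case: ifP => //; rewrite mulrC.
  rewrite (_ : (a + b <= n)%N = false); last by lia.
  rewrite (_ : (a < n - b)%N = false); last by lia.
  by rewrite !andbF.
apply: eq_bigr => j _.
rewrite mulr_sumr (big_ord_widen_cond n.+1 (fun a => (0 < a < n - j)%N)
  (fun a => k j * t ^+ (a != (n - j - a)%N))); last by rewrite ltnS leq_subr.
rewrite [RHS]big_mkcond /=; apply: eq_bigr => a _.
by case: (boolP (0 < a < n - j)%N) => /= h //; rewrite (_ : (a < (n - j).+1)%N) //; lia.
Qed.

End K2.


Section K3.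
Variables (R : comRingType) (t x : R).

Lemma gE s : g t s = \sum_(1 <= a < s) t ^+ (a != (s - a)%N).
Proof.
rewrite /g -(big_mkord (fun a => (0 < a < s)%N) (fun a => t ^+ (a != (s - a)%N))).
rewrite big_ltn_cond //= (big_nat_widen 1 s s.+1) // big_nat_cond [RHS]big_nat_cond.
apply: eq_bigl => a; lia.
Qed.

Lemma g0 : g t 0 = 0. Proof. by rewrite gE big_geq. Qed.
Lemma g1 : g t 1 = 0. Proof. by rewrite gE big_geq. Qed.
Lemma g2 : g t 2 = 1. Proof. by rewrite gE big_nat1. Qed.
Lemma g3 : g t 3 = t + t.
Proof. by rewrite gE big_ltn // big_nat1 /= expr1. Qed.

Lemma gS s : (0 < s)%N -> g t s.+2 = g t s + t + t.
Proof.
move=> s0; rewrite !gE big_ltn; last by lia.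
rewrite big_nat_recr /=; last by lia.
rewrite (_ : (1 != s.+1) = true); last by lia.
rewrite (_ : (s.+1 != (s.+2 - s.+1)%N) = true); last by lia.
rewrite expr1 big_add1 /= big_nat_cond [in RHS]big_nat_cond.
rewrite (eq_bigr (fun a => t ^+ (a != (s - a)%N))); first by ring.
move=> a /andP[/andP[a1 as_] _].
by rewrite (_ : (s.+2 - a.+1 = (s - a).+1)%N) ?eqSS //; lia.
Qed.

End K3.

Section K4.
Variables (R : comRingType) (t x : R).

Lemma keyK n : Kcoef t x n = (n == 0)%:R + (0 < n)%:R * x +
  x ^+ 2 * \sum_(j < n.+1) Kcoef t x j * g t (n - j).
Proof.
have ur : uniq (index_iota 0 n.+1) by apply: iota_uniq.
have rn : forall a, (0 < a <= n)%N -> a \in index_iota 0 n.+1.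
  by move=> a ha; rewrite mem_index_iota; lia.
rewrite -{1}(@Ksum_norm R t x (index_iota 0 n.+1) n.+2 n ur rn) // Ksum_dec.
congr (_ + _ + _).
- case: n ur rn => [|n] ur rn; first by rewrite big_pred0 ?mul0r // => a; rewrite andbC; case: eqP => // ->.
  rewrite (eq_bigl (fun a => a == n.+1)); last by move=> a; case: eqP => [->|]; rewrite ?andbF ?andbT.
  rewrite big_mkcond big_nat_recr //= eqxx big1_seq ?add0r ?mul1r // => i /andP[_].
  by rewrite mem_index_iota => hi; rewrite ifN_eq //; lia.
rewrite -conv; congr (_ * _).
rewrite big_mkord; apply: eq_bigr => a _.
rewrite big_mkord; apply: eq_big => [b|b /and3P[a0 b0 abn]] //.
rewrite (@Ksum_norm R t x (index_iota 0 n.+1) n (n - a - b) ur) //.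
  by move=> c hc; rewrite mem_index_iota; lia.
lia.
Qed.
End K4.


Section K5.
Variables (R : comRingType) (t x : R).

Lemma sum_delta (F : nat -> R) N (c : nat) :
  \sum_(i < N) (i == c :> nat)%:R * F i = if (c < N)%N then F c else 0.
Proof.
case: ifP => cN.
  rewrite (bigD1 (Ordinal cN)) //= eqxx mul1r big1 ?addr0 // => i /negbTE ic.
  by rewrite (_ : (i == c :> nat) = false) ?mul0r //; apply: contraFF ic => /eqP h; apply/eqP/val_inj.
rewrite big1 // => i _; rewrite (_ : (i == c :> nat) = false) ?mul0r //.
by apply/negbTE; apply/eqP => h; move: (ltn_ord i); rewrite h cN.
Qed.

Definition Hc (k : nat -> R) n := \sum_(j < n.+1) k j * g t (n - j).

Lemma H_widen k n M : (n < M)%N -> Hc k n = \sum_(j < M) k j * g t (n - j).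
Proof.
move=> nM; rewrite /Hc (big_ord_widen M (fun j => k j * g t (n - j))) //.
rewrite big_mkcond; apply: eq_bigr => j _; case: ifP => // h.
by rewrite (_ : (n - j = 0)%N) ?g0 ?mulr0 //; lia.
Qed.

Lemma dH k n : Hc k n.+3 - Hc k n.+2 - Hc k n.+1 + Hc k n = k n.+1 + (t + t - 1) * k n.
Proof.
rewrite !(@H_widen k _ n.+4); try lia.
rewrite -!sumrB -big_split /=.
rewrite (eq_bigr (fun j : 'I_n.+4 => (j == n.+1 :> nat)%:R * k j + (j == n :> nat)%:R * ((t + t - 1) * k j))).
  by rewrite big_split /= sum_delta (sum_delta (fun i => (t + t - 1) * k i)) !ifT //; lia.
move=> j _; have := ltn_ord j; move: (nat_of_ord j) => {}j hj.
case: (ltngtP j n) => h.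
- have [s hs] : exists s, n = (j + s.+1)%N by exists (n - j).-1; lia.
  rewrite hs (_ : (j + s.+1).+3 - j = s.+4)%N; last by lia.
  rewrite (_ : (j + s.+1).+2 - j = s.+3)%N; last by lia.
  rewrite (_ : (j + s.+1).+1 - j = s.+2)%N; last by lia.
  rewrite (_ : (j + s.+1) - j = s.+1)%N; last by lia.
  rewrite (@gS R t s.+2) // (@gS R t s.+1) //.
  rewrite (_ : (j == (j + s.+1).+1) = false) /=; last by lia.
  ring.
- have : (j = n.+1 \/ j = n.+2 \/ j = n.+3) by lia.
  case=> [->|[->|->]].
  + rewrite eqxx /=.
    rewrite (_ : n.+3 - n.+1 = 2)%N; last by lia.
    rewrite (_ : n.+2 - n.+1 = 1)%N; last by lia.
    rewrite (_ : n.+1 - n.+1 = 0)%N; last by lia.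
    rewrite (_ : n - n.+1 = 0)%N; last by lia.
    rewrite g2 g1 g0; ring.
  + rewrite (_ : (n.+2 == n.+1) = false) /=; last by lia.
    rewrite (_ : n.+3 - n.+2 = 1)%N; last by lia.
    rewrite (_ : n.+2 - n.+2 = 0)%N; last by lia.
    rewrite (_ : n.+1 - n.+2 = 0)%N; last by lia.
    rewrite (_ : n - n.+2 = 0)%N; last by lia.
    rewrite g1 g0; ring.
  + rewrite (_ : (n.+3 == n.+1) = false) /=; last by lia.
    rewrite (_ : n.+3 - n.+3 = 0)%N; last by lia.
    rewrite (_ : n.+2 - n.+3 = 0)%N; last by lia.
    rewrite (_ : n.+1 - n.+3 = 0)%N; last by lia.
    rewrite (_ : n - n.+3 = 0)%N; last by lia.
    rewrite g0; ring.
- subst j; rewrite (_ : (n == n.+1) = false) /=; last by lia.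
  rewrite (_ : n.+3 - n = 3)%N; last by lia.
  rewrite (_ : n.+2 - n = 2)%N; last by lia.
  rewrite (_ : n.+1 - n = 1)%N; last by lia.
  rewrite subnn g3 g2 g1 g0; ring.
Qed.

End K5.


Section K6.
Variables (R : comRingType) (t x : R).

Lemma Kden_coef i : (Kden t x)`_i = (i == 0)%:R - (i == 1)%:R - (i == 2)%:R * (1 + x ^+ 2)
   + (i == 3)%:R * (1 + x ^+ 2 - 2 * t * x ^+ 2).
Proof.
have -> : Kden t x = 1 - 'X - (1 + x ^+ 2)%:P * 'X^2 + (1 + x ^+ 2 - 2 * t * x ^+ 2)%:P * 'X^3.
  rewrite /Kden; ring.
rewrite !coefD !coefN coef1 !coefCM ?coefX !coefXn; ring.
Qed.

Lemma Knum_coef i : (Knum t x)`_i = (i == 0)%:R + (i == 1)%:R * (x - 1) - (i == 2)%:R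
   + (i == 3)%:R * (1 - x).
Proof.
have -> : Knum t x = 1 + (x - 1)%:P * 'X - 'X^2 + (1 - x)%:P * 'X^3.
  rewrite /Knum; ring.
rewrite !coefD !coefN coef1 !coefCM ?coefX !coefXn; ring.
Qed.

End K6.

Section K7.
Variables (R : comRingType) (t x : R).

Lemma alg (k : nat -> R) m :
  (forall n, k n = (n == 0)%:R + (0 < n)%:R * x + x ^+ 2 * Hc t k n) ->
  k m.+3 - k m.+2 - (1 + x ^+ 2) * k m.+1 + (1 + x ^+ 2 - 2 * t * x ^+ 2) * k m
  = (m == 0)%:R * (1 - x).
Proof.
move=> kE; have dh := dH t k m.
rewrite (kE m.+1) (kE m) in dh.
rewrite !kE.
have e : Hc t k m.+3 = Hc t k m.+2 + Hc t k m.+1 - Hc t k m +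
   ((m.+1 == 0)%:R + (0 < m.+1)%:R * x + x ^+ 2 * Hc t k m.+1 +
     (t + t - 1) * ((m == 0)%:R + (0 < m)%:R * x + x ^+ 2 * Hc t k m)).
  by rewrite -dh; ring.
rewrite e; case: m {e dh} => [|m] /=; ring.
Qed.

Lemma main n :
  \sum_(i < n.+1) (Kden t x)`_i * Kcoef t x (n - i) = (Knum t x)`_n.
Proof.
set k := Kcoef t x.
have kE : forall n, k n = (n == 0)%:R + (0 < n)%:R * x + x ^+ 2 * Hc t k n.
  by move=> m; rewrite /k keyK.
rewrite (eq_bigr (fun i : 'I_n.+1 => (i == 0 :> nat)%:R * k (n - i)%N - (i == 1 :> nat)%:R * k (n - i)%N
   - (i == 2 :> nat)%:R * ((1 + x ^+ 2) * k (n - i)%N)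
   + (i == 3 :> nat)%:R * ((1 + x ^+ 2 - 2 * t * x ^+ 2) * k (n - i)%N))); last first.
  by move=> i _; rewrite Kden_coef; ring.
rewrite big_split /= !sumrB !(sum_delta (fun i => k (n - i)%N))
  (sum_delta (fun i => (1 + x ^+ 2) * k (n - i)%N))
  (sum_delta (fun i => (1 + x ^+ 2 - 2 * t * x ^+ 2) * k (n - i)%N)) Knum_coef.
have k0 : k 0 = 1.
  by rewrite kE /Hc big_ord_recl big_ord0 /= g0; ring.
have k1 : k 1 = x.
  by rewrite kE /Hc !big_ord_recl big_ord0 /= g0 g1; ring.
have k2 : k 2 = x + x ^+ 2.
  by rewrite kE /Hc !big_ord_recl big_ord0 /= g0 g1 g2 k0; ring.
case: n => [|[|[|m]]] /=.
- rewrite k0; ring.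
- rewrite k0 k1; ring.
- rewrite k0 k1 k2; ring.
rewrite !subn0 (_ : (m.+3 - 1 = m.+2)%N) // (_ : (m.+3 - 2 = m.+1)%N) // (_ : (m.+3 - 3 = m)%N); last by lia.
have := alg m kE; rewrite /= => ->; ring.
Qed.

End K7.


End Aux.

Theorem proposition2p1 (R : comRingType) (t x : R) (n : nat) :
  \sum_(i < n.+1) (Kden t x)`_i * Kcoef t x (n - i) = (Knum t x)`_n.
Proof. exact: Aux.main. Qed.
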